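(* In the three-dimensional Poisson regression model with first-order interactions, $\mathbf{f}(\mathbf{x})^\top\boldsymbol{\beta}=\beta_0+\beta_1x_1+\beta_2x_2+\beta_3x_3+\beta_{12}x_1x_2+\beta_{13}x_1x_3+\beta_{23}x_2x_3$, let $\beta_0=0$, $\beta_1=\beta_2=\beta_3=-1$ and $\beta_{12}=\beta_{13}=\beta_{23}=0$. Then the design which assigns equal weights $1/7$ to the seven settings $(0,0,0)$, $(2,0,0)$, $(0,2,0)$, $(0,0,2)$, $(2,2,0)$, $(2,0,2)$, $(0,2,2)$ is locally $D$-optimal at $\boldsymbol{\beta}$ on $\mathcal{X}=[0,\infty)^3$.
   Context: An observation at $\mathbf{x}=(x_1,x_2,x_3)$ is Poisson distributed with mean $\lambda(\mathbf{x})=\exp(\mathbf{f}(\mathbf{x})^\top\boldsymbol{\beta})$ with $\mathbf{f}(\mathbf{x})=(1,x_1,x_2,x_3,x_1x_2,x_1x_3,x_2x_3)^\top$. A design $\xi$ is a finite collection of distinct settings $\mathbf{x}_i\in\mathcal{X}$ with weights $w_i\ge0$ summing to $1$; its information matrix is $\mathbf{M}_{\boldsymbol{\beta}}(\xi)=\sum_i w_i\lambda(\mathbf{x}_i)\mathbf{f}(\mathbf{x}_i)\mathbf{f}(\mathbf{x}_i)^\top$. A design is locally $D$-optimal at $\boldsymbol{\beta}$ on $\mathcal{X}$ if it maximizes $\det\mathbf{M}_{\boldsymbol{\beta}}(\xi)$ over all designs on $\mathcal{X}$. *)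

(* Defs.v *)
From HB Require Import structures.
From mathcomp Require Import all_boot all_order all_algebra.
From mathcomp Require Import reals.
From mathcomp.analysis Require Import sequences exp.
Set Implicit Arguments. Unset Strict Implicit. Unset Printing Implicit Defensive.
Import Order.TTheory GRing.Theory Num.Theory.
Local Open Scope ring_scope.

Definition pt (R : Type) := (R * R * R)%type.
Definition x1 {R : Type} (p : pt R) : R := p.1.1.
Definition x2 {R : Type} (p : pt R) : R := p.1.2.
Definition x3 {R : Type} (p : pt R) : R := p.2.

Definition fvec (R : realType) (p : pt R) : 'cV[R]_7 :=
  \col_(i < 7) nth 0 [:: 1; x1 p; x2 p; x3 p; x1 p * x2 p; x1 p * x3 p; x2 p * x3 p] i.

Definition lambda (R : realType) (beta : 'cV[R]_7) (p : pt R) : R :=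
  expR (((fvec p)^T *m beta) 0 0).

Definition is_design (R : realType) (X : pt R -> Prop) (n : nat)
    (x : 'I_n -> pt R) (w : 'I_n -> R) : Prop :=
  injective x /\ (forall i, X (x i)) /\ (forall i, 0 <= w i) /\ \sum_(i < n) w i = 1.

Definition infomat (R : realType) (beta : 'cV[R]_7) (n : nat)
    (x : 'I_n -> pt R) (w : 'I_n -> R) : 'M[R]_7 :=
  \sum_(i < n) (w i * lambda beta (x i)) *: (fvec (x i) *m (fvec (x i))^T).

Definition locally_D_optimal (R : realType) (beta : 'cV[R]_7) (X : pt R -> Prop)
    (n : nat) (x : 'I_n -> pt R) (w : 'I_n -> R) : Prop :=
  is_design X x w /\
  forall (m : nat) (y : 'I_m -> pt R) (v : 'I_m -> R),
    is_design X y v -> \det (infomat beta y v) <= \det (infomat beta x w).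

Definition nonneg_orthant (R : realType) (p : pt R) : Prop :=
  0 <= x1 p /\ 0 <= x2 p /\ 0 <= x3 p.

Definition beta_cor1 (R : realType) : 'cV[R]_7 :=
  \col_(i < 7) nth 0 [:: 0; -1; -1; -1; 0; 0; 0] i.

Definition pts_cor1 (R : realType) : 'I_7 -> pt R := fun i =>
  nth (0, 0, 0) [:: (0, 0, 0); (2, 0, 0); (0, 2, 0); (0, 0, 2);
                    (2, 2, 0); (2, 0, 2); (0, 2, 2)] i.

Definition wts_cor1 (R : realType) : 'I_7 -> R := fun _ => 1 / 7%:R.

(* Main.v *)
Require Import Defs.
From mathcomp Require Import all_boot all_order all_algebra.
From mathcomp Require Import reals.
From mathcomp.analysis Require Import sequences exp.
From HB Require Import structures.
From mathcomp Require Import boolp classical_sets functions topology normedtype derive.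
From mathcomp Require Import ring lra.
Set Implicit Arguments. Unset Strict Implicit. Unset Printing Implicit Defensive.
Import Order.TTheory GRing.Theory Num.Theory.
Import numFieldNormedType.Exports.
Local Open Scope classical_set_scope.
Local Open Scope ring_scope.


Section T.
Variable R : realType.

Definition g1 (y : R) := expR y - (1 + y).
Definition g2 (y : R) := expR y - (1 + y + y^+2 / 2).
Definition g3 (y : R) := expR y - (1 + y + y^+2 / 2 + y^+3 / 6).

Lemma scR (a b : R) : a *: b = a * b. Proof. by []. Qed.

Lemma dg2 (x : R) : is_derive x 1 g2 (g1 x).
Proof.
rewrite /g2; apply: is_derive_eq.
by rewrite /g1 !scR; field.
Qed.

Lemma dg3 (x : R) : is_derive x 1 g3 (g2 x).
Proof.
rewrite /g3; apply: is_derive_eq.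
by rewrite /g2 !scR; field.
Qed.

Lemma cont_of_der (g dg : R -> R) : (forall x : R, is_derive x 1 g (dg x)) ->
  forall a b : R, {within `[a, b], continuous g}.
Proof.
move=> H a b; apply: continuous_subspaceT => x.
apply: differentiable_continuous; apply/derivable1_diffP.
exact: (@ex_derive _ _ _ _ _ _ _ (H x)).
Qed.

Lemma g1_ge0 (y : R) : 0 <= g1 y.
Proof. by rewrite /g1 subr_ge0 expR_ge1Dx. Qed.

Lemma g2_0 : g2 0 = 0.
Proof. by rewrite /g2 expR0 expr0n /=; ring. Qed.
Lemma g3_0 : g3 0 = 0.
Proof. by rewrite /g3 expR0 !expr0n /=; ring. Qed.

Lemma g2_le0 (y : R) : y <= 0 -> g2 y <= 0.
Proof.
rewrite le_eqVlt => /predU1P[->|y0]; first by rewrite g2_0.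
have [c _ H] := MVT y0 (fun x _ => dg2 x) (@cont_of_der _ _ dg2 y 0).
have : 0 <= g2 0 - g2 y by rewrite H mulr_ge0 ?g1_ge0 // subr_ge0 ltW.
by rewrite g2_0 sub0r oppr_ge0.
Qed.

Lemma g2_ge0 (y : R) : 0 <= y -> 0 <= g2 y.
Proof.
rewrite le_eqVlt => /predU1P[<-|y0]; first by rewrite g2_0.
have [c _ H] := MVT y0 (fun x _ => dg2 x) (@cont_of_der _ _ dg2 0 y).
have : 0 <= g2 y - g2 0 by rewrite H mulr_ge0 ?g1_ge0 // subr_ge0 ltW.
by rewrite g2_0 subr0.
Qed.

Lemma g3_ge0 (y : R) : 0 <= g3 y.
Proof.
have [y0|y0] := leP 0 y.
  move: y0; rewrite le_eqVlt => /predU1P[<-|y0]; first by rewrite g3_0.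
  have [c] := MVT y0 (fun x _ => dg3 x) (@cont_of_der _ _ dg3 0 y).
  rewrite in_itv /= => /andP[c0 _] H.
  have : 0 <= g3 y - g3 0.
    by rewrite H; apply: mulr_ge0; [apply: g2_ge0; exact: ltW | rewrite subr_ge0 ltW].
  by rewrite g3_0 subr0.
have [c] := MVT y0 (fun x _ => dg3 x) (@cont_of_der _ _ dg3 y 0).
rewrite in_itv /= => /andP[_ c0] H.
have : g3 0 - g3 y <= 0.
  by rewrite H; apply: mulr_le0_ge0; [apply: g2_le0; exact: ltW | rewrite subr_ge0 ltW].
by rewrite g3_0 sub0r oppr_le0.
Qed.

Lemma expR_taylor3 (y : R) : 1 + y + y^+2 / 2 + y^+3 / 6 <= expR y.
Proof. by have := g3_ge0 y; rewrite /g3 subr_ge0. Qed.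


Lemma sq_lb (a b y : R) : 0 <= a -> a <= y -> b <= a * a -> b <= y^+2.
Proof. move=> a0 ay ba; rewrite expr2; nra. Qed.

Lemma expR2_lo : 738/100 <= expR (2 : R).
Proof.
have t := expR_taylor3 (1/4 : R).
have x0 : 493/384 <= expR (1/4 : R) by move: t; lra.
have e : expR (2 : R) = expR (1/4) ^+ 8.
  by rewrite -expRM_natl; congr expR; rewrite -[8]/(8%:R) /=; lra.
rewrite e; set x := expR (1/4 : R) in x0 *.
have x2 : 6593/4000 <= x^+2 by apply: (sq_lb _ x0); lra.
have x4 : 815/300 <= x^+4 by rewrite (_ : x^+4 = (x^+2)^+2) ?(sq_lb _ x2) -?exprM //; lra.
have x8 : 738/100 <= x^+8 by rewrite (_ : x^+8 = (x^+4)^+2) ?(sq_lb _ x4) -?exprM //; lra.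
exact: x8.
Qed.

Lemma expR2_hi : expR (2 : R) <= 74/10.
Proof.
have t := expR_taylor3 (- (1/8) : R).
have x0 : 2711/3072 <= expR (- (1/8) : R) by move: t; lra.
have e : expR (- 2 : R) = expR (- (1/8)) ^+ 16.
  by rewrite -expRM_natl; congr expR; rewrite -[16]/(16%:R) /=; lra.
set x := expR (- (1/8) : R) in x0 e.
have x2 : 3115/4000 <= x^+2 by apply: (sq_lb _ x0); lra.
have x4 : 379/625 <= x^+4 by rewrite (_ : x^+4 = (x^+2)^+2) ?(sq_lb _ x2) -?exprM //; lra.
have x8 : 1103/3000 <= x^+8 by rewrite (_ : x^+8 = (x^+4)^+2) ?(sq_lb _ x4) -?exprM //; lra.
have x16 : 10/74 <= x^+16 by rewrite (_ : x^+16 = (x^+8)^+2) ?(sq_lb _ x8) -?exprM //; lra.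
have p := expRxMexpNx_1 (2 : R).
have g0 := expR_gt0 (2 : R).
rewrite e in p; nra.
Qed.


Lemma ell_le_exp (t : R) : 0 <= t ->
  (1 - t)^+2 + expR 2 * t^+2 + 7/2 * t * (1 - t)^+2 <= expR (2 * t).
Proof.
move=> t0.
have h1 := expR2_lo; have h2 := expR2_hi.
set E := expR (2 : R) in h1 h2 *.
have [ts|tl] := leP t (3/5).
  apply: le_trans (expR_taylor3 (2 * t)).
  have q : 0 <= 1/2 + (8 - E) * t - 13/6 * t^+2 by nra.
  have := mulr_ge0 t0 q.
  move=> H.
  have -> : 1 + 2 * t + (2 * t)^+2 / 2 + (2 * t)^+3 / 6 =
    (1 - t)^+2 + E * t^+2 + 7/2 * t * (1 - t)^+2 + t * (1/2 + (8 - E) * t - 13/6 * t^+2).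
    by field.
  lra.
have -> : expR (2 * t) = E * expR (2 * (t - 1)).
  by rewrite /E -expRD; congr expR; ring.
have T := expR_taylor3 (2 * (t - 1)).
have E0 : 0 <= E by lra.
have T2 := ler_wpM2l E0 T.
apply: le_trans T2.
set y := t - 1.
have br : 0 <= (E - 1 - 7/2) + (4 * E / 3 - 7/2) * y by rewrite /y; nra.
have := mulr_ge0 (sqr_ge0 y) br.
move=> H.
have -> : E * (1 + 2 * y + (2 * y)^+2 / 2 + (2 * y)^+3 / 6) =
   (1 - t)^+2 + E * t^+2 + 7/2 * t * (1 - t)^+2 + y^+2 * ((E - 1 - 7/2) + (4 * E / 3 - 7/2) * y).
  by rewrite /y; field.
lra.
Qed.

End T.


Section Had.
Variable R : realFieldType.

Definition gram n m (v : 'I_m -> R) (h : 'I_m -> 'cV[R]_n) : 'M[R]_n :=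
  \sum_(k < m) v k *: (h k *m (h k)^T).

Lemma gramE n m v h (i j : 'I_n) :
  @gram n m v h i j = \sum_(k < m) v k * (h k i 0 * h k j 0).
Proof.
rewrite /gram summxE; apply: eq_bigr => k _.
by rewrite !mxE big_ord1 !mxE.
Qed.

Lemma gram_sym n m v h (i j : 'I_n) : @gram n m v h i j = gram v h j i.
Proof. by rewrite !gramE; apply: eq_bigr => k _; rewrite (mulrC (h k i 0)). Qed.

Lemma gram_diag_ge0 n m v h (i : 'I_n) : (forall k, 0 <= v k) -> 0 <= @gram n m v h i i.
Proof.
move=> v0; rewrite gramE; apply: sumr_ge0 => k _.
by rewrite mulr_ge0 // -expr2 sqr_ge0.
Qed.

Lemma det_schur n (G : 'M[R]_(1 + n)) (a := G 0 0) : a != 0 ->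
  \det G = a * \det (drsubmx G - (a^-1 *: dlsubmx G) *m ursubmx G).
Proof.
move=> a0.
set b := dlsubmx G; set S := drsubmx G - _.
have ul : ulsubmx G = a%:M.
  apply/matrixP => i j; rewrite !ord1 !mxE /=.
  by congr (G _ _); apply/val_inj.
have -> : G = block_mx 1%:M 0 (a^-1 *: b) 1%:M *m block_mx a%:M (ursubmx G) 0 S.
  rewrite mulmx_block !mul1mx !mul0mx !addr0 ?add0r mul_mx_scalar scalerA mulfV //.
  by rewrite scale1r /S addrC subrK -ul submxK.
by rewrite det_mulmx det_lblock det_ublock !det1 det_scalar1 !mul1r.
Qed.


Lemma lshift0 n : lshift n (0 : 'I_1) = 0 :> 'I_(1 + n).
Proof. exact/val_inj. Qed.

Lemma rshift1 n (i : 'I_n) : rshift 1 i = lift ord0 i :> 'I_(1 + n).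
Proof. exact/val_inj. Qed.

Lemma hadamard n : forall m (v : 'I_m -> R) (h : 'I_m -> 'cV[R]_n),
  (forall k, 0 <= v k) -> \det (gram v h) <= \prod_(i < n) gram v h i i.
Proof.
elim: n => [|n IH] m v h v0.
  by rewrite det_mx00 big_ord0.
set G := gram v h.
have Gii i : 0 <= G i i by apply: gram_diag_ge0.
have [a0|an0] := eqVneq (G 0 0) 0.
  have vh k : v k * h k 0 0 = 0.
    have : G 0 0 = 0 := a0.
    rewrite /G gramE => /eqP; rewrite psumr_eq0 => [/allP /(_ k) |k' _]; last first.
      by rewrite mulr_ge0 // -expr2 sqr_ge0.
    rewrite mem_index_enum => /(_ isT).
    rewrite mulf_eq0 => /orP[/eqP -> |]; first by rewrite mul0r.
    by rewrite mulf_eq0 orbb => /eqP ->; rewrite mulr0.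
  have row0 j : G 0 j = 0.
    rewrite /G gramE big1 // => k _.
    by rewrite mulrA vh mul0r.
  rewrite (expand_det_row _ 0) big1 => [|j _]; last by rewrite row0 mul0r.
  by apply: prodr_ge0 => i _.
have a_gt0 : 0 < G 0 0 by rewrite lt_def an0 Gii.
set a := G 0 0 in an0 a_gt0.
pose h' k : 'cV_n := \col_i (h k (lift ord0 i) 0 - (h k 0 0 / a) * G (lift ord0 i) 0).
have SE : drsubmx (G : 'M_(1 + n)) - (a^-1 *: dlsubmx (G : 'M_(1 + n))) *m ursubmx (G : 'M_(1 + n))
    = gram v h'.
  apply/matrixP => i j.
  rewrite !mxE big_ord1 !mxE !rshift1 !lshift0 [in RHS]gramE.
  set bi := G (lift ord0 i) 0; set bj := G (lift ord0 j) 0.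
  have e k : v k * (h' k i 0 * h' k j 0) =
     v k * (h k (lift ord0 i) 0 * h k (lift ord0 j) 0)
     + (- (bj / a * (v k * (h k (lift ord0 i) 0 * h k 0 0))))
     + (- (bi / a * (v k * (h k (lift ord0 j) 0 * h k 0 0))))
     + bi * bj / a ^+ 2 * (v k * (h k 0 0 * h k 0 0)).
    by rewrite !mxE /bi /bj; field.
  rewrite (eq_bigr _ (fun k _ => e k)) !big_split /= !sumrN -!mulr_sumr.
  rewrite -!gramE -/G -/a -/bi -/bj (gram_sym _ _ 0) -/bj.
  by field.
have := @det_schur n G an0.
rewrite SE => ->.
rewrite big_ord_recl.
apply: le_trans (ler_wpM2l (ltW a_gt0) (IH m v h' v0)) _.
rewrite ler_wpM2l ?(ltW a_gt0) //; apply: ler_prod => i _.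
apply/andP; split; first exact: gram_diag_ge0.
rewrite -SE !mxE big_ord1 !mxE !rshift1 !lshift0 (gram_sym _ _ 0).
rewrite lerBlDr lerDl -mulrA mulr_ge0 ?invr_ge0 ?(ltW a_gt0) //.
by rewrite -expr2 sqr_ge0.
Qed.

Lemma gram_det_le n m (v : 'I_m -> R) (h : 'I_m -> 'cV[R]_n.+1) :
  (forall k, 0 <= v k) -> \sum_(k < m) v k = 1 ->
  (forall k, \sum_(i < n.+1) h k i 0 ^+ 2 <= 1) ->
  \det (gram v h) <= (n.+1%:R^-1) ^+ n.+1.
Proof.
move=> v0 v1 h1.
apply: le_trans (hadamard h v0) _.
have Hle := (@leif_AGM R 'I_n.+1 predT (fun i => gram v h i i)
   (fun i _ => gram_diag_ge0 h i v0)).1.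
move: Hle; rewrite /= cardT size_enum_ord => Hle.
apply: le_trans Hle _.
have tr : \sum_(i < n.+1) gram v h i i <= 1.
  under eq_bigr do rewrite gramE.
  rewrite exchange_big /= -v1; apply: ler_sum => k _.
  rewrite -mulr_sumr -[X in _ <= X]mulr1 ler_wpM2l //.
  by apply: le_trans (h1 k); rewrite le_eqVlt; apply/orP; left; apply/eqP/eq_bigr => i _; rewrite expr2.
have tr0 : 0 <= \sum_(i < n.+1) gram v h i i.
  by apply: sumr_ge0 => i _; apply: gram_diag_ge0.
rewrite lerXn2r ?nnegrE ?invr_ge0 ?ler0n ?divr_ge0 ?ler0n //.
by rewrite -[X in _ <= X]mul1r ler_wpM2r ?invr_ge0 ?ler0n.
Qed.

End Had.


Section Poly.
Variable R : realFieldType.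
Variable E : R.

Definition kap : R := 7/2.
Definition Af (t : R) := (1 - t)^+2 + E * t^+2.
Definition Gf (t : R) := kap * t * (1 - t)^+2.
Definition Wf (t : R) := (1 + E) * t^+2 - t.
Definition Kc := (1 + E)^+3.

Lemma L1b (t : R) : 0 <= t -> 738/100 <= E -> E <= 74/10 -> 0 <= E^+2 * kap * (1 - t)^+2 - 2 * (1 + E)^+2 + Kc / 3 * t.
Proof.
move=> t0 hE1 hE2; rewrite /Kc /kap.
have e1 : (738/100)^+2 <= E^+2 :> R by nra.
have e2 : (1 + E)^+2 <= (84/10)^+2 :> R by nra.
have e3 : (838/100)^+3 <= (1 + E)^+3 :> R by nra.
have u0 : 0 <= (1 - t)^+2 := sqr_ge0 _.
have s0 : 0 <= (1 - t - 1/2)^+2 := sqr_ge0 _.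
have b1 : (738/100)^+2 * (7/2) * (1 - t)^+2 <= E^+2 * (7/2) * (1 - t)^+2.
  nra.
have b3 : (838/100)^+3 / 3 * t <= (1 + E)^+3 / 3 * t.
  nra.
have q : 0 <= (738/100)^+2 * (7/2) * (1 - t)^+2 - 2 * (84/10)^+2 + (838/100)^+3 / 3 * t.
  nra.
lra.
Qed.


Lemma A_ge (t : R) : E * t^+2 <= Af t.
Proof. by rewrite /Af lerDr sqr_ge0. Qed.

Lemma A_ge0 (t : R) : 0 <= E -> 0 <= Af t.
Proof. move=> E0; have := sqr_ge0 (1 - t); have := sqr_ge0 t; rewrite /Af; nra. Qed.

Lemma G_ge0 (t : R) : 0 <= t -> 0 <= Gf t.
Proof. move=> t0; have := sqr_ge0 (1 - t); rewrite /Gf /kap; nra. Qed.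

Lemma L1 (t : R) : 0 <= t -> 738/100 <= E -> E <= 74/10 ->
  0 <= E^+2 * Gf t - 2 * (1 + E)^+2 * t + Kc / 3 * t^+2.
Proof.
move=> t0 h1 h2; have := L1b t0 h1 h2.
have -> : E^+2 * Gf t - 2 * (1 + E)^+2 * t + Kc / 3 * t^+2 =
  t * (E^+2 * kap * (1 - t)^+2 - 2 * (1 + E)^+2 + Kc / 3 * t) by rewrite /Gf; ring.
by move=> H; rewrite mulr_ge0.
Qed.

Lemma L2 (t : R) : 0 <= t -> 738/100 <= E -> E <= 74/10 -> Wf t < 0 ->
  Kc * t^+2 <= E^+2 * Gf t.
Proof.
rewrite /Wf /Kc /Gf /kap => t0 h1 h2 hw.
have t8 : t <= 1/8 by nra.
have e1 : 7 <= E by lra.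
have u1 : (7/8)^+2 <= (1 - t)^+2 by nra.
have a : (1 + E)^+3 * t <= (1 + E)^+2.
  have : (1 + E) * t <= 1 by nra.
  have p : 0 <= (1 + E)^+2 by rewrite sqr_ge0.
  move=> H; have := ler_wpM2l p H; rewrite mulr1 => H2.
  by apply: le_trans H2; rewrite le_eqVlt; apply/orP; left; apply/eqP; ring.
have b : (1 + E)^+2 <= 71 by nra.
have c : 49 <= E^+2 by nra.
have d : 71 <= E^+2 * (7/2) * (1 - t)^+2 by nra.
have : (1 + E)^+3 * t <= E^+2 * (7/2) * (1 - t)^+2 by lra.
move=> H; have := ler_wpM2l t0 H => H2.
apply: le_trans (_ : t * ((1 + E)^+3 * t) <= _).
  by rewrite le_eqVlt; apply/orP; left; apply/eqP; ring.
by apply: le_trans H2 _; rewrite le_eqVlt; apply/orP; left; apply/eqP; ring.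
Qed.


Definition Sf (t1 t2 t3 : R) :=
  Gf t1 * Af t2 * Af t3 + Af t1 * Gf t2 * Af t3 + Af t1 * Af t2 * Gf t3
  + 2 * (Wf t1 * Wf t2 * Wf t3).
Definition Pf (t1 t2 t3 : R) := Kc * (t1 * t2 * t3)^+2.

Lemma Sf_12 a b c : Sf a b c = Sf b a c. Proof. rewrite /Sf; ring. Qed.
Lemma Sf_13 a b c : Sf a b c = Sf c b a. Proof. rewrite /Sf; ring. Qed.
Lemma Sf_23 a b c : Sf a b c = Sf a c b. Proof. rewrite /Sf; ring. Qed.
Lemma Pf_12 a b c : Pf a b c = Pf b a c. Proof. rewrite /Pf; ring. Qed.
Lemma Pf_13 a b c : Pf a b c = Pf c b a. Proof. rewrite /Pf; ring. Qed.
Lemma Pf_23 a b c : Pf a b c = Pf a c b. Proof. rewrite /Pf; ring. Qed.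

Lemma GAA_ge t1 t2 t3 : 0 <= t1 -> 0 <= E ->
  Gf t1 * (E * t2^+2) * (E * t3^+2) <= Gf t1 * Af t2 * Af t3.
Proof.
move=> t0 E0; have g := G_ge0 t0.
have a2 := A_ge t2; have a3 := A_ge t3.
have p2 : 0 <= E * t2^+2 by rewrite mulr_ge0 // sqr_ge0.
have p3 : 0 <= E * t3^+2 by rewrite mulr_ge0 // sqr_ge0.
have h := ler_pM p2 p3 a2 a3.
by have := ler_wpM2l g h; rewrite !mulrA.
Qed.

Lemma caseP t1 t2 t3 : 0 <= t1 -> 0 <= t2 -> 0 <= t3 ->
  738/100 <= E -> E <= 74/10 ->
  0 <= Wf t1 -> 0 <= Wf t2 -> 0 <= Wf t3 -> Pf t1 t2 t3 <= Sf t1 t2 t3.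
Proof.
move=> t10 t20 t30 h1 h2 w1 w2 w3.
have E0 : 0 <= E by lra.
pose X t := (1 + E) * t^+2.
have X0 t : 0 <= X t by rewrite /X mulr_ge0 ?sqr_ge0 //; lra.
have WX t : Wf t <= X t - t by rewrite /Wf /X le_eqVlt; apply/orP; left; apply/eqP; ring.
have WX' t : 0 <= t -> Wf t <= X t by move=> tt; apply: le_trans (WX t) _; lra.
have f4 : X t1 * X t2 * X t3 - (t1 * X t2 * X t3 + X t1 * t2 * X t3 + X t1 * X t2 * t3)
     <= Wf t1 * Wf t2 * Wf t3.
  have e : X t1 * X t2 * X t3 - Wf t1 * Wf t2 * Wf t3 =
     t1 * X t2 * X t3 + Wf t1 * t2 * X t3 + Wf t1 * Wf t2 * t3.
    by rewrite /X /Wf; ring.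
  have i1 : Wf t1 * t2 * X t3 <= X t1 * t2 * X t3.
    by apply: ler_wpM2r => //; apply: ler_wpM2r => //; apply: WX'.
  have i2 : Wf t1 * Wf t2 * t3 <= X t1 * X t2 * t3.
    apply: ler_wpM2r => //; apply: ler_pM => //; exact: WX'.
  lra.
have g1 := GAA_ge t2 t3 t10 E0.
have g2 := GAA_ge t1 t3 t20 E0.
have g3 := GAA_ge t1 t2 t30 E0.
have l1 := L1 t10 h1 h2; have l2 := L1 t20 h1 h2; have l3 := L1 t30 h1 h2.
have m1 : 0 <= (t2 * t3)^+2 * (E^+2 * Gf t1 - 2 * (1 + E)^+2 * t1 + Kc / 3 * t1^+2).
  by rewrite mulr_ge0 // sqr_ge0.
have m2 : 0 <= (t1 * t3)^+2 * (E^+2 * Gf t2 - 2 * (1 + E)^+2 * t2 + Kc / 3 * t2^+2).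
  by rewrite mulr_ge0 // sqr_ge0.
have m3 : 0 <= (t1 * t2)^+2 * (E^+2 * Gf t3 - 2 * (1 + E)^+2 * t3 + Kc / 3 * t3^+2).
  by rewrite mulr_ge0 // sqr_ge0.
have Ga : Gf t2 * Af t1 * Af t3 = Af t1 * Gf t2 * Af t3 by ring.
have Gb : Gf t3 * Af t1 * Af t2 = Af t1 * Af t2 * Gf t3 by ring.
have key : Sf t1 t2 t3 - Pf t1 t2 t3 >=
  (Gf t1 * (E * t2^+2) * (E * t3^+2) + Gf t2 * (E * t1^+2) * (E * t3^+2)
   + Gf t3 * (E * t1^+2) * (E * t2^+2))
  + 2 * (X t1 * X t2 * X t3 - (t1 * X t2 * X t3 + X t1 * t2 * X t3 + X t1 * X t2 * t3))
  - Pf t1 t2 t3.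
  rewrite /Sf; lra.
have id : (Gf t1 * (E * t2^+2) * (E * t3^+2) + Gf t2 * (E * t1^+2) * (E * t3^+2)
   + Gf t3 * (E * t1^+2) * (E * t2^+2))
  + 2 * (X t1 * X t2 * X t3 - (t1 * X t2 * X t3 + X t1 * t2 * X t3 + X t1 * X t2 * t3))
  - Pf t1 t2 t3 =
  (t2 * t3)^+2 * (E^+2 * Gf t1 - 2 * (1 + E)^+2 * t1 + Kc / 3 * t1^+2) +
  (t1 * t3)^+2 * (E^+2 * Gf t2 - 2 * (1 + E)^+2 * t2 + Kc / 3 * t2^+2) +
  (t1 * t2)^+2 * (E^+2 * Gf t3 - 2 * (1 + E)^+2 * t3 + Kc / 3 * t3^+2).
  by rewrite /X /Pf /Kc; field.
lra.
Qed.


Lemma p3ge0 (a b c : R) : 0 <= a -> 0 <= b -> 0 <= c -> 0 <= a * b * c.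
Proof. by move=> *; rewrite !mulr_ge0. Qed.

Lemma caseN1 t1 t2 t3 : 0 <= t1 -> 0 <= t2 -> 0 <= t3 ->
  738/100 <= E -> E <= 74/10 ->
  Wf t1 < 0 -> 0 <= Wf t2 -> 0 <= Wf t3 -> Pf t1 t2 t3 <= Sf t1 t2 t3.
Proof.
move=> t10 t20 t30 h1 h2 w1 w2 w3.
have E0 : 0 <= E by lra.
have qW t : 0 <= t -> E * Wf t <= (1 + E) * Af t.
  move=> tt; have := A_ge t; rewrite /Wf => a.
  have : E * ((1 + E) * t^+2 - t) <= (1 + E) * (E * t^+2) by nra.
  move=> b; apply: le_trans b _; apply: ler_wpM2l => //; lra.
have p2 : 0 <= E * Wf t2 by rewrite mulr_ge0.
have p3 : 0 <= E * Wf t3 by rewrite mulr_ge0.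
have pr := ler_pM p2 p3 (qW _ t20) (qW _ t30).
have f := ler_wnM2l (ltW w1) pr.
have l1 := L1 t10 h1 h2.
have gid : E^+2 * Gf t1 + 2 * (1 + E)^+2 * Wf t1 - Kc * t1^+2 =
   (E^+2 * Gf t1 - 2 * (1 + E)^+2 * t1 + Kc / 3 * t1^+2) + 2/3 * Kc * t1^+2.
  by rewrite /Wf /Kc; field.
have K0 : 0 <= Kc by rewrite /Kc exprn_ge0 //; lra.
have t1s : 0 <= t1^+2 := sqr_ge0 _.
have g : Kc * t1^+2 <= E^+2 * Gf t1 + 2 * (1 + E)^+2 * Wf t1.
  have : 0 <= 2/3 * Kc * t1^+2 by nra.
  lra.
have a2 := A_ge t2; have a3 := A_ge t3.
have e2 : 0 <= E * t2^+2 by rewrite mulr_ge0 // sqr_ge0.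
have e3 : 0 <= E * t3^+2 by rewrite mulr_ge0 // sqr_ge0.
have AA := ler_pM e2 e3 a2 a3.
have AA0 : 0 <= Af t2 * Af t3 by apply: le_trans AA; rewrite mulr_ge0.
have k1 := ler_wpM2l AA0 g.
have Kt : 0 <= Kc * t1^+2 by rewrite mulr_ge0.
have k2 := ler_wpM2r Kt AA.
have n2 : 0 <= E^+2 * (Af t1 * Gf t2 * Af t3).
  by apply: mulr_ge0; [exact: sqr_ge0 | apply: p3ge0; [exact: A_ge0|exact: G_ge0|exact: A_ge0]].
have n3 : 0 <= E^+2 * (Af t1 * Af t2 * Gf t3).
  by apply: mulr_ge0; [exact: sqr_ge0 | apply: p3ge0; [exact: A_ge0|exact: A_ge0|exact: G_ge0]].
have fin : 0 <= E^+2 * (Sf t1 t2 t3 - Pf t1 t2 t3).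
  rewrite /Sf /Pf.
  lra.
have E2 : 0 < E^+2 by rewrite exprn_gt0 //; lra.
by move: fin; rewrite pmulr_rge0 // subr_ge0.
Qed.


Lemma G1AA t1 t2 t3 : 0 <= t1 -> 738/100 <= E -> E <= 74/10 -> Wf t1 < 0 ->
  Pf t1 t2 t3 <= Gf t1 * Af t2 * Af t3.
Proof.
move=> t10 h1 h2 w1.
have E0 : 0 <= E by lra.
have g := GAA_ge t2 t3 t10 E0.
have l := L2 t10 h1 h2 w1.
have s : 0 <= (t2 * t3)^+2 := sqr_ge0 _.
have := ler_wpM2l s l.
move=> H; apply: le_trans g; rewrite /Pf.
apply: le_trans (le_trans _ H) _.
  by rewrite le_eqVlt; apply/orP; left; apply/eqP; ring.
by rewrite le_eqVlt; apply/orP; left; apply/eqP; ring.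
Qed.

Lemma caseN2 t1 t2 t3 : 0 <= t1 -> 0 <= t2 -> 0 <= t3 ->
  738/100 <= E -> E <= 74/10 ->
  Wf t1 < 0 -> Wf t2 < 0 -> 0 <= Wf t3 -> Pf t1 t2 t3 <= Sf t1 t2 t3.
Proof.
move=> t10 t20 t30 h1 h2 w1 w2 w3.
have E0 : 0 <= E by lra.
have g := G1AA t2 t3 t10 h1 h2 w1.
have n2 : 0 <= Af t1 * Gf t2 * Af t3 by apply: p3ge0; [exact: A_ge0|exact: G_ge0|exact: A_ge0].
have n3 : 0 <= Af t1 * Af t2 * Gf t3 by apply: p3ge0; [exact: A_ge0|exact: A_ge0|exact: G_ge0].
have ww : 0 <= Wf t1 * Wf t2 * Wf t3.
  by apply: mulr_ge0 => //; apply: mulr_le0; apply: ltW.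
rewrite /Sf; lra.
Qed.

Lemma caseN3 t1 t2 t3 : 0 <= t1 -> 0 <= t2 -> 0 <= t3 ->
  738/100 <= E -> E <= 74/10 ->
  Wf t1 < 0 -> Wf t2 < 0 -> Wf t3 < 0 -> Pf t1 t2 t3 <= Sf t1 t2 t3.
Proof.
move=> t10 t20 t30 h1 h2 w1 w2 w3.
have E0 : 0 <= E by lra.
have g := G1AA t2 t3 t10 h1 h2 w1.
have n3 : 0 <= Af t1 * Af t2 * Gf t3 by apply: p3ge0; [exact: A_ge0|exact: A_ge0|exact: G_ge0].
have sm t : 0 <= t -> Wf t < 0 -> t <= 1/8 /\ - t <= Wf t.
  rewrite /Wf => tt wt; split; nra.
have [s1 m1] := sm _ t10 w1; have [s2 m2] := sm _ t20 w2; have [s3 m3] := sm _ t30 w3.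
have W12 : 0 <= Wf t1 * Wf t2 <= t1 * t2.
  apply/andP; split; first by apply: mulr_le0; apply: ltW.
  have : (- Wf t1) * (- Wf t2) <= t1 * t2.
    apply: ler_pM; [rewrite oppr_ge0 ltW // | rewrite oppr_ge0 ltW // | lra | lra].
  by rewrite mulrNN.
have ww : - (t1 * t2 * t3) <= Wf t1 * Wf t2 * Wf t3.
  case/andP: W12 => a b.
  have c := ler_wpM2l a m3.
  have d : t1 * t2 * (- t3) <= Wf t1 * Wf t2 * (- t3).
    by apply: ler_wnM2r => //; lra.
  move: c d; rewrite !mulrN; lra.
have A1 : (7/8)^+2 <= Af t1 by rewrite /Af; nra.
have A3 : (7/8)^+2 <= Af t3 by rewrite /Af; nra.
have G2 : 3 * t2 * (7/8)^+2 <= Gf t2 by rewrite /Gf /kap; nra.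
have G20 : 0 <= 3 * t2 * (7/8)^+2 by nra.
have AA := ler_pM (sqr_ge0 _) (sqr_ge0 _) A1 A3.
have P1 := ler_pM G20 (mulr_ge0 (sqr_ge0 _) (sqr_ge0 _)) G2 AA.
have tt : t1 * t2 * t3 <= t2 / 64 by nra.
have : 2 * (t1 * t2 * t3) <= Af t1 * Gf t2 * Af t3.
  apply: le_trans (_ : 3 * t2 * (7/8)^+2 * ((7/8)^+2 * (7/8)^+2) <= _).
    by nra.
  by apply: le_trans P1 _; rewrite le_eqVlt; apply/orP; left; apply/eqP; ring.
rewrite /Sf; lra.
Qed.


Lemma Sf_ge t1 t2 t3 : 0 <= t1 -> 0 <= t2 -> 0 <= t3 ->
  738/100 <= E -> E <= 74/10 -> Pf t1 t2 t3 <= Sf t1 t2 t3.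
Proof.
move=> a b c h1 h2.
have [w1|w1] := ltP (Wf t1) 0; have [w2|w2] := ltP (Wf t2) 0;
  have [w3|w3] := ltP (Wf t3) 0.
- exact: caseN3.
- exact: caseN2.
- by rewrite Pf_23 Sf_23; apply: caseN2.
- exact: caseN1.
- by rewrite Pf_13 Sf_13; apply: caseN2.
- by rewrite Pf_12 Sf_12; apply: caseN1.
- by rewrite Pf_13 Sf_13; apply: caseN1.
- exact: caseP.
Qed.

Definition Qf (t1 t2 t3 : R) :=
  (1 - t1 - t2 - t3 + t1 * t2 + t1 * t3 + t2 * t3)^+2
  + E * ((t1 - t1 * t2 - t1 * t3)^+2 + (t2 - t1 * t2 - t2 * t3)^+2
         + (t3 - t1 * t3 - t2 * t3)^+2)
  + E^+2 * ((t1 * t2)^+2 + (t1 * t3)^+2 + (t2 * t3)^+2).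

Definition ellf (t : R) := Af t + Gf t.

Lemma Qf_le t1 t2 t3 : 0 <= t1 -> 0 <= t2 -> 0 <= t3 ->
  738/100 <= E -> E <= 74/10 -> Qf t1 t2 t3 <= ellf t1 * ellf t2 * ellf t3.
Proof.
move=> a b c h1 h2.
have E0 : 0 <= E by lra.
have S := Sf_ge a b c h1 h2.
have eQ : Qf t1 t2 t3 = Af t1 * Af t2 * Af t3 - 2 * (Wf t1 * Wf t2 * Wf t3) + Pf t1 t2 t3.
  by rewrite /Qf /Af /Wf /Pf /Kc; ring.
have eL : ellf t1 * ellf t2 * ellf t3 = Af t1 * Af t2 * Af t3
   + (Gf t1 * Af t2 * Af t3 + Af t1 * Gf t2 * Af t3 + Af t1 * Af t2 * Gf t3)
   + (Gf t1 * Gf t2 * Af t3 + Gf t1 * Af t2 * Gf t3 + Af t1 * Gf t2 * Gf t3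
      + Gf t1 * Gf t2 * Gf t3).
  by rewrite /ellf; ring.
have x1 : 0 <= Gf t1 * Gf t2 * Af t3 by apply: p3ge0; [exact: G_ge0|exact: G_ge0|exact: A_ge0].
have x2 : 0 <= Gf t1 * Af t2 * Gf t3 by apply: p3ge0; [exact: G_ge0|exact: A_ge0|exact: G_ge0].
have x3 : 0 <= Af t1 * Gf t2 * Gf t3 by apply: p3ge0; [exact: A_ge0|exact: G_ge0|exact: G_ge0].
have x4 : 0 <= Gf t1 * Gf t2 * Gf t3 by apply: p3ge0; exact: G_ge0.
rewrite eQ eL; move: S; rewrite /Sf; lra.
Qed.

End Poly.


Section Red.
Variable R : realType.

Lemma sum7 (F : 'I_7 -> R) : \sum_(i < 7) F i =
  F 0 + F (lift ord0 0) + F (lift ord0 (lift ord0 0))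
  + F (lift ord0 (lift ord0 (lift ord0 0)))
  + F (lift ord0 (lift ord0 (lift ord0 (lift ord0 0))))
  + F (lift ord0 (lift ord0 (lift ord0 (lift ord0 (lift ord0 0)))))
  + F (lift ord0 (lift ord0 (lift ord0 (lift ord0 (lift ord0 (lift ord0 0)))))).
Proof. by rewrite !big_ord_recl big_ord0 !addrA addr0. Qed.

Definition av (p : pt R) : R := expR (- (x1 p + x2 p + x3 p) / 2).

Lemma lam_av (y : pt R) : lambda (beta_cor1 R) y = av y ^+ 2.
Proof.
rewrite /lambda /av -expRM_natl; congr expR.
rewrite !mxE sum7 !mxE /=.
by field.
Qed.

Lemma av_neq0 p : av p != 0.
Proof. by rewrite /av gt_eqF // expR_gt0. Qed.

Definition Lv (y : pt R) (j : 'I_7) : R :=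
  let t1 := x1 y / 2 in let t2 := x2 y / 2 in let t3 := x3 y / 2 in
  nth 0 [:: 1 - t1 - t2 - t3 + t1 * t2 + t1 * t3 + t2 * t3;
            t1 - t1 * t2 - t1 * t3; t2 - t1 * t2 - t2 * t3; t3 - t1 * t3 - t2 * t3;
            t1 * t2; t1 * t3; t2 * t3] j.

Definition Tm : 'M[R]_7 := \matrix_(i, j) (av (pts_cor1 R j) * fvec (pts_cor1 R j) i 0).
Definition cv (y : pt R) : 'cV[R]_7 := \col_j (Lv y j / av (pts_cor1 R j)).

Lemma Tc y : Tm *m cv y = fvec y.
Proof.
apply/matrixP => i k; rewrite ord1 !mxE.
have e (a f l : R) : a != 0 -> a * f * (l / a) = f * l by move=> a0; field.
under eq_bigr => j _ do rewrite !mxE e ?av_neq0 //.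
rewrite sum7 /Lv /=.
case: i => [[|[|[|[|[|[|[|//]]]]]]] Hi] /=; rewrite /x1 /x2 /x3 /=.
all: by field.
Qed.


Definition hv (y : pt R) : 'cV[R]_7 := av y *: cv y.

Lemma infomat_T m (y : 'I_m -> pt R) (v : 'I_m -> R) :
  infomat (beta_cor1 R) y v = Tm *m gram v (fun k => hv (y k)) *m Tm^T.
Proof.
rewrite /infomat /gram mulmx_sumr mulmx_suml; apply: eq_bigr => k _.
have Th : Tm *m hv (y k) = av (y k) *: fvec (y k) by rewrite /hv -scalemxAr Tc.
rewrite -scalemxAr -scalemxAl.
have E1 : Tm *m (hv (y k) *m (hv (y k))^T) *m Tm^T =
   (Tm *m hv (y k)) *m (Tm *m hv (y k))^T by rewrite trmx_mul !mulmxA.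
rewrite E1 Th linearZ /= -scalemxAr -scalemxAl scalerA scalerA lam_av.
by congr (_ *: _); rewrite expr2 mulrA.
Qed.

Lemma infomat_opt :
  infomat (beta_cor1 R) (@pts_cor1 R) (@wts_cor1 R) = (1 / 7%:R) *: (Tm *m Tm^T).
Proof.
apply/matrixP => i k.
rewrite /infomat summxE !mxE mulr_sumr; apply: eq_bigr => j _.
rewrite !mxE big_ord1 !mxE lam_av /wts_cor1; ring.
Qed.


Lemma av_sq (y : pt R) : av y ^+ 2 = expR (- (x1 y + x2 y + x3 y)).
Proof. by rewrite /av -expRM_natl; congr expR; field. Qed.

Lemma div_av_sq (l : R) p : (l / av p) ^+ 2 = l ^+ 2 * expR (x1 p + x2 p + x3 p).
Proof.
rewrite expr_div_n av_sq expRN invrK; done.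
Qed.

Lemma expR_pts (j : 'I_7) :
  expR (x1 (pts_cor1 R j) + x2 (pts_cor1 R j) + x3 (pts_cor1 R j)) =
  nth 0 [:: 1; expR 2; expR 2; expR 2; expR 2 ^+ 2; expR 2 ^+ 2; expR 2 ^+ 2] j.
Proof.
have e4 : expR (4 : R) = expR 2 ^+ 2 by rewrite -expRM_natl; congr expR; lra.
case: j => [[|[|[|[|[|[|[|//]]]]]]] Hj] /=; rewrite /x1 /x2 /x3 /=.
- by rewrite !addr0 expR0.
- by rewrite !addr0.
- by rewrite addr0 add0r.
- by rewrite !add0r.
- by rewrite addr0 -e4; congr expR; lra.
- by rewrite addr0 -e4; congr expR; lra.
- by rewrite add0r -e4; congr expR; lra.
Qed.

Lemma hv_norm (y : pt R) : nonneg_orthant y -> \sum_(i < 7) hv y i 0 ^+ 2 <= 1.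
Proof.
case=> y1 [y2 y3].
set E := expR (2 : R).
have h1 : 738/100 <= E := expR2_lo R.
have h2 : E <= 74/10 := expR2_hi R.
set t1 := x1 y / 2; set t2 := x2 y / 2; set t3 := x3 y / 2.
have t10 : 0 <= t1 by rewrite /t1; lra.
have t20 : 0 <= t2 by rewrite /t2; lra.
have t30 : 0 <= t3 by rewrite /t3; lra.
have eS : \sum_(i < 7) hv y i 0 ^+ 2 = av y ^+ 2 * Qf E t1 t2 t3.
  have ht (a l : R) p : (a * (l / av p))^+2 = a^+2 * (l^+2 * expR (x1 p + x2 p + x3 p)).
    by rewrite exprMn div_av_sq.
  rewrite sum7 /hv !mxE !ht !expR_pts /Lv /= /Qf -/E /t1 /t2 /t3; ring.
rewrite eS av_sq.
have Q := Qf_le t10 t20 t30 h1 h2.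
have E0 : 0 <= E by lra.
have el t : 0 <= t -> 0 <= ellf E t /\ ellf E t <= expR (2 * t).
  move=> t0; split; first by rewrite /ellf addr_ge0 ?A_ge0 ?G_ge0.
  by rewrite /ellf /Af /Gf /kap; apply: ell_le_exp.
have [e10 e1] := el _ t10; have [e20 e2] := el _ t20; have [e30 e3] := el _ t30.
have P := ler_pM (mulr_ge0 e10 e20) e30 (ler_pM e10 e20 e1 e2) e3.
have eX : expR (2 * t1) * expR (2 * t2) * expR (2 * t3) = expR (x1 y + x2 y + x3 y).
  by rewrite -!expRD; congr expR; rewrite /t1 /t2 /t3; field.
have Q2 := le_trans Q P; rewrite eX in Q2.
have := ler_wpM2l (expR_ge0 (- (x1 y + x2 y + x3 y))) Q2.
by rewrite -expRD addNr expR0.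
Qed.

End Red.

Lemma pts_inj (R : realType) : injective (@pts_cor1 R).
Proof.
    move=> [[|[|[|[|[|[|[|//]]]]]]] Hi] [[|[|[|[|[|[|[|//]]]]]]] Hj].
    all: rewrite /pts_cor1 /=.
    all: try (by move=> _; apply/val_inj).
    all: move=> H; have := congr1 (fun p : pt R => x1 p + 2 * x2 p + 4 * x3 p) H.
    all: rewrite /x1 /x2 /x3 /= => H2.
    all: suff : (0 : R) < 0 by rewrite ltxx.
    all: lra.
Qed.

Lemma pts_X (R : realType) i : nonneg_orthant (@pts_cor1 R i).
Proof.
move: i => [[|[|[|[|[|[|[|//]]]]]]] Hi]; rewrite /nonneg_orthant /x1 /x2 /x3 /=.
all: split; [lra | split; lra].
Qed.

Theorem corollary1 (R : realType) :
  locally_D_optimal (beta_cor1 R) (@nonneg_orthant R) (@pts_cor1 R) (@wts_cor1 R).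
Proof.
split.
  split; first exact: pts_inj.
  split; first exact: pts_X.
  split; first by move=> i; rewrite /wts_cor1; lra.
  by rewrite sum7 /wts_cor1; field.
move=> m y v [_ [yX [v0 v1]]].
rewrite infomat_T infomat_opt !det_mulmx det_tr detZ det_mulmx det_tr.
have G := @gram_det_le R 6 m v (fun k => hv (y k)) v0 v1 (fun k => hv_norm (yX k)).
have D : 0 <= \det (Tm R) * \det (Tm R) by rewrite -expr2 sqr_ge0.
have := ler_wpM2l D G.
set g := \det (gram _ _).
move=> H; apply: le_trans (_ : \det (Tm R) * \det (Tm R) * g <= _).
  by rewrite le_eqVlt; apply/orP; left; apply/eqP; ring.
apply: le_trans H _.
by rewrite le_eqVlt; apply/orP; left; apply/eqP; rewrite /=; field.
Qed.
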